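(* Let $\mathcal N=(\mathcal L,\mathcal I,D_{\mathcal L})$ be a network (with a general collision profile) of character $D^*$, and let $S$ be a framed schedule of frame length $T_F\ge 3D^*+1$. Then $S$ is collision free if and only if for every $k\ge0$, every link $l$ that is active in frame $k$, and every $\phi\in\mathcal I(l)$, some $l'\in\phi$ is inactive in frame $k$.
   Context: A network is a triple $\mathcal N=(\mathcal L,\mathcal I,D_{\mathcal L})$ where $\mathcal L$ is a finite nonempty set of links, each $\mathcal I(l)$ is a collection of nonempty subsets of $\mathcal L$, and $D_{\mathcal L}$ assigns an integer $D_{\mathcal L}(l,l')$ to every pair with $l'\in\phi$ for some $\phi\in\mathcal I(l)$. The character is $D^*=\max_{l}\max_{\phi\in\mathcal I(l)}\max_{l'\in\phi}|D_{\mathcal L}(l,l')|$ (0 if there are no collision sets). A schedule is a map $S:\mathcal L\times\mathbb Z\to\{0,1\}$; $S(l,t)$ has a collision if there is $\phi\in\mathcal I(l)$ with $S(l',t+D_{\mathcal L}(l,l'))=1$ for all $l'\in\phi$; $S$ is collision free if no $(l,t)$ with $S(l,t)=1$ has a collision. For an integer $T_F\ge D^*+1$, a framed schedule of frame length $T_F$ is a schedule $S$ with $S(l,t)=0$ for $t<0$, such that for every $k\ge0$ (frame $k$ consists of timeslots $kT_F,\dots,(k+1)T_F-1$) and every $l$: $S(l,kT_F+i)=0$ for $i=T_F-D^*,\dots,T_F-1$, and the values $S(l,kT_F+i)$, $i=0,\dots,T_F-D^*-1$, are all equal. Link $l$ is active in frame $k$ if these values equal 1, and inactive otherwise. *)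

(* Defs.v *)
From mathcomp Require Import all_boot all_order all_algebra.
Set Implicit Arguments. Unset Strict Implicit. Unset Printing Implicit Defensive.
Import Order.TTheory GRing.Theory Num.Theory.

(* A network: finite nonempty link set L (a finType with #|L| > 0),
   collision profile I l (a collection of nonempty subsets of L),
   and relative delays D l l' (only relevant when l' lies in some phi in I l). *)
Record network := Network {
  link : finType;
  link_nonempty : 0 < #|link|;
  coll : link -> {set {set link}};
  coll_nonempty : forall l phi, phi \in coll l -> phi != set0;
  delay : link -> link -> int
}.

(* Character D* (0 when there are no collision sets). *)
Definition character (N : network) : nat :=
  \max_(l : link N) \max_(phi in coll l) \max_(l' in phi) `|delay l l'|%N.

Definition schedule (N : network) := link N -> int -> bool.

Definition has_collision (N : network) (S : schedule N) (l : link N) (t : int) : Prop :=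
  exists2 phi, phi \in coll l & forall l', l' \in phi -> S l' (t + delay l l')%R.

Definition collision_free (N : network) (S : schedule N) : Prop :=
  forall l t, S l t -> ~ has_collision S l t.

Definition framed (N : network) (TF : nat) (S : schedule N) : Prop :=
  [/\ (character N).+1 <= TF,
      (forall l (t : int), (t < 0)%R -> S l t = false),
      (forall (k : nat) l (i : nat), TF - character N <= i < TF ->
          S l (Posz (k * TF + i)) = false) &
      (forall (k : nat) l (i j : nat), i < TF - character N -> j < TF - character N ->
          S l (Posz (k * TF + i)) = S l (Posz (k * TF + j)))].

Definition active (N : network) (TF : nat) (S : schedule N) (k : nat) (l : link N) : Prop :=
  forall i : nat, i < TF - character N -> S l (Posz (k * TF + i)).

(* Main.v *)
Require Import Defs.
From mathcomp Require Import all_boot all_order all_algebra.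
From mathcomp Require Import zify.
Import Order.TTheory GRing.Theory Num.Theory.

Lemma delay_bound (N : network) (l l' : link N) phi :
  phi \in coll l -> l' \in phi -> (`|delay l l'| <= character N)%N.
Proof.
move=> Hphi Hl'; rewrite /character.
apply: leq_trans (leq_bigmax_cond _ (isT : predT l)).
apply: leq_trans (leq_bigmax_cond _ Hphi).
exact: (leq_bigmax_cond _ Hl').
Qed.

Lemma frame_val (N : network) (TF : nat) (S : schedule N) l (k j : nat) :
  framed TF S -> j < TF - character N -> S l (Posz (k * TF + j)) = S l (Posz (k * TF)).
Proof.
case=> H1 _ _ H4 Hj; rewrite -[X in _ = S l (Posz X)]addn0; apply: H4 => //; lia.
Qed.

Lemma nat_val (N : network) (TF : nat) (S : schedule N) l (n : nat) :
  framed TF S -> S l (Posz n) = (n %% TF < TF - character N) && S l (Posz (n %/ TF * TF)).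
Proof.
move=> F; have [H1 _ H3 _] := F.
have TF0 : 0 < TF by lia.
rewrite {1}(divn_eq n TF).
case: ltnP => Hi /=.
  by rewrite frame_val.
by apply: H3; rewrite Hi /= ltn_pmod.
Qed.

Lemma active_iff (N : network) (TF : nat) (S : schedule N) k l :
  framed TF S -> active TF S k l <-> S l (Posz (k * TF)).
Proof.
move=> F; have [H1 _ _ _] := F; split.
  by move=> A; rewrite -[k * TF]addn0; apply: A; lia.
by move=> H i Hi; rewrite frame_val.
Qed.

Arguments active_iff {N TF S k l}.
Arguments frame_val {N TF S l k j}.
Arguments nat_val {N TF S l n}.
Arguments delay_bound {N l l' phi}.

Theorem lemma2 (N : network) (TF : nat) (S : schedule N) :
  framed TF S -> 3 * character N + 1 <= TF ->
  (collision_free S <->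
   forall (k : nat) (l : link N), active TF S k l ->
     forall phi, phi \in coll l -> exists2 l', l' \in phi & ~ active TF S k l').
Proof.
move=> F H3; have [H1 H2 _ _] := F; set D := character N in H1 H3 *.
split.
- move=> CF k l /(active_iff F) Al phi Hphi.
  case E: [exists l' in phi, ~~ S l' (Posz (k * TF))].
    case/existsP: E => l' /andP [Hl' Hn]; exists l' => //.
    by move/(active_iff F); apply/negP.
  exfalso; apply: (CF l (Posz (k * TF + D))).
    by rewrite (frame_val F) //; lia.
  exists phi => // l' Hl'.
  have Hd := delay_bound Hphi Hl'; rewrite -/D in Hd.
  have -> : (Posz (k * TF + D) + delay l l' = Posz (k * TF + absz (Posz D + delay l l')%R))%R.
    lia.
  rewrite (frame_val F); last by lia.
  apply/negbNE/negP => Hn; move/negbT/negP: E; apply; apply/existsP; exists l'.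
  by rewrite Hl' Hn.
- move=> H l t Slt [phi Hphi Hcol].
  case: t Slt Hcol => [n|n] Slt Hcol; last by rewrite H2 in Slt.
  rewrite (nat_val F) in Slt; case/andP: Slt => Hi Sk.
  have [l' Hl' Na] := H (n %/ TF) l (proj2 (active_iff F) Sk) phi Hphi.
  move/(active_iff F): Na => Na.
  have Hd := delay_bound Hphi Hl'; rewrite -/D in Hd.
  have := Hcol l' Hl'.
  case E: (Posz n + delay l l')%R => [m|m] Sm; last by rewrite H2 in Sm.
  rewrite (nat_val F) in Sm; case/andP: Sm => Hm Sm.
  suff Q : m %/ TF = n %/ TF by rewrite Q in Sm.
  have := divn_eq m TF; have := divn_eq n TF.
  have := ltn_pmod m (leq_ltn_trans (leq0n D) H1).
  have := ltn_pmod n (leq_ltn_trans (leq0n D) H1).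
  move: (m %/ TF) (n %/ TF) (m %% TF) (n %% TF) Hi Hm => q k r i Hi Hm.
  move=> _ _ En Em.
  have : (Posz m - Posz n <= Posz D /\ Posz n - Posz m <= Posz D)%R by lia.
  case=> B1 B2.
  case: (ltngtP q k) => // Hqk; exfalso.
  + have : q * TF + TF <= k * TF by rewrite -mulSnr leq_mul2r Hqk orbT.
    lia.
  + have : k * TF + TF <= q * TF by rewrite -mulSnr leq_mul2r Hqk orbT.
    lia.
Qed.
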